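(* Let $r\in\{1,\dots,p\}$, $l\in\{1,\dots,r\}$, $L=\{1,\dots,l\}$, and let $1\le t_1<\dots<t_l\le r$ be integers; set $t_{l+1}:=r+1$ and $P=\{t_\iota:\iota\in L\}$. Let $\delta_{t_\iota}\in\mathbb{R}$ ($\iota\in L$) satisfy $\delta_{t_\iota}\ge h_{t_{\iota+1}}-h_{t_\iota}$ for all $\iota\in L$ and $\sum_{\iota\in L}\delta_{t_\iota}\le h_{r+1}$. Let $v\in\{1,\dots,p-r+l\}$, $V=\{1,\dots,v\}$, and let $r+1\le q_1<\dots<q_v\le m$ be integers, $Q=\{q_\iota:\iota\in V\}$. For $j\in M$ let $a_j=|\{\iota\in L:t_\iota<j\}|$ and $F_j=\sum_{i=1}^j\pi_i$, and let $A_j\subseteq V$ be arbitrary. Suppose $(\phi_{q_1},\dots,\phi_{q_v})\in\mathbb{R}^v_+$ is such that for every $j\in M$ there exists $\beta_j\ge0$ with $$\max\Big\{\tfrac{\phi_{q_\iota}}{m\pi_{q_\iota}}:\iota\in A_j,\ q_\iota>j\Big\}\le\beta_j\le\min\Big\{\tfrac{\phi_{q_\iota}}{m\pi_{q_\iota}}:\iota\in V\setminus A_j,\ q_\iota>j\Big\}$$ (with $\max\emptyset=-\infty$, $\min\emptyset=+\infty$) and $$\beta_j\Big(F_j-\pi_j-\varepsilon+\sum_{\iota\in V,\ q_\iota>j}\pi_{q_\iota}-\sum_{\iota\in A_j,\ q_\iota>j}\pi_{q_\iota}\Big)\ \ge\ \frac1m\Big(h_{t_{a_j+1}}-h_j-\sum_{\iota\in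 L,\ t_\iota<j}\delta_{t_\iota}-\mathbb{I}(j\in Q)\,\phi_j-\sum_{\iota\in A_j,\ q_\iota>j}\phi_{q_\iota}\Big),$$ where $\mathbb{I}(j\in Q)=1$ if $j\in Q$ and $0$ otherwise, and for $j\in Q$, $\phi_j$ denotes $\phi_{q_\iota}$ with $q_\iota=j$. Then the inequality $$z+\sum_{\iota=1}^l\big(h_{t_\iota}-h_{t_{\iota+1}}+\delta_{t_\iota}\big)x_{t_\iota}+\sum_{\iota=1}^v\phi_{q_\iota}(1-x_{q_\iota})\ \ge\ h_{t_1}$$ is valid for $\operatorname{proj}_{(z,\mathbf{x})}\operatorname{conv}(\mathcal{S}_c)$, and hence valid for $\operatorname{conv}(\mathcal{F}_c)$.
   Context: Let $m\ge2$, $M=\{1,\dots,m\}$, $\varepsilon\in[0,1)$, $\boldsymbol{\pi}\in\mathbb{R}^m$ with $\pi_i>0$, $\pi_i\le\varepsilon$ for all $i$ and $\sum_i\pi_i=1$, and $h_1\ge h_2\ge\dots\ge h_m\ge0$. Let $p=\max\{k:\sum_{i=1}^k\pi_i\le\varepsilon\}$ (so $1\le p\le m-1$). The mixing set with a knapsack constraint is $\mathcal{F}_c=\{(z,\mathbf{x})\in\mathbb{R}_+\times\{0,1\}^m : x_i=0\Rightarrow z\ge h_i\ \forall i\in M,\ \boldsymbol{\pi}^\top\mathbf{x}\le\varepsilon\}$. Let $\Xi_c=\{(z,\mathbf{x})\in\mathbb{R}_+\times\mathbb{R}^m_+ : \mathbf{x}\le\mathbf{1},\ \boldsymbol{\pi}^\top\mathbf{x}\le\varepsilon\}$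 and $\Delta_m=\{\mathbf{y}\in\mathbb{Z}^m_+:\mathbf{1}^\top\mathbf{y}\le1\}$. The bilinear set $\mathcal{S}_c$ is the set of $(z,\mathbf{x};\mathbf{y})\in\Xi_c\times\Delta_m$ satisfying: $(1-x_i)(1-\mathbf{1}^\top\mathbf{y})\ge0$ and $-(1-x_i)(1-\mathbf{1}^\top\mathbf{y})\ge0$ for all $i\in M$; $zy_i-h_iy_i\ge0$ for all $i\in M$; $-x_iy_i\ge0$ for all $i\in M$; $-(1-x_i)y_j\ge0$ for all $i,j\in M$ with $i<j$. *)

(* Defs.v *)
(* All index families are nat-indexed and 1-based, as in the paper;
   only indices 1..m (resp. 1..l, 1..v) are meaningful. *)
From mathcomp Require Import all_boot all_order all_algebra.
Set Implicit Arguments. Unset Strict Implicit. Unset Printing Implicit Defensive.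
Import Order.TTheory GRing.Theory Num.Theory.
Local Open Scope ring_scope.

Section Defs.
Variable R : realFieldType.

Definition Fsum (pi : nat -> R) (j : nat) : R := \sum_(1 <= i < j.+1) pi i.

Definition pidx (m : nat) (pi : nat -> R) (eps : R) : nat :=
  \max_(k < m.+1 | Fsum pi k <= eps) (k : nat).

Definition text (t : nat -> nat) (l r : nat) (i : nat) : nat :=
  if i == l.+1 then r.+1 else t i.

Definition acount (t : nat -> nat) (l j : nat) : nat :=
  count (fun i => (t i < j)%N) (iota 1 l).

Definition inQ (q : nat -> nat) (v j : nat) : bool :=
  has (fun i => q i == j) (iota 1 v).

Definition Fc (m : nat) (pi h : nat -> R) (eps : R) (z : R) (x : nat -> R) : Prop :=
  0 <= z /\
  (forall i, (1 <= i <= m)%N -> x i = 0 \/ x i = 1) /\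
  (forall i, (1 <= i <= m)%N -> x i = 0 -> h i <= z) /\
  \sum_(1 <= i < m.+1) pi i * x i <= eps.

Definition Xic (m : nat) (pi : nat -> R) (eps : R) (z : R) (x : nat -> R) : Prop :=
  0 <= z /\
  (forall i, (1 <= i <= m)%N -> 0 <= x i /\ x i <= 1) /\
  \sum_(1 <= i < m.+1) pi i * x i <= eps.

Definition Deltam (m : nat) (y : nat -> R) : Prop :=
  (forall i, (1 <= i <= m)%N -> exists n : nat, y i = n%:R) /\
  \sum_(1 <= i < m.+1) y i <= 1.

Definition Sc (m : nat) (pi h : nat -> R) (eps : R)
    (z : R) (x y : nat -> R) : Prop :=
  Xic m pi eps z x /\ Deltam m y /\
  (let sy := \sum_(1 <= i < m.+1) y i in
   (forall i, (1 <= i <= m)%N ->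
      0 <= (1 - x i) * (1 - sy) /\ 0 <= - ((1 - x i) * (1 - sy))) /\
   (forall i, (1 <= i <= m)%N -> 0 <= z * y i - h i * y i) /\
   (forall i, (1 <= i <= m)%N -> 0 <= - (x i * y i)) /\
   (forall i j, (1 <= i)%N -> (i < j)%N -> (j <= m)%N -> 0 <= - ((1 - x i) * y j))).

Definition conv3 (m : nat) (S : R -> (nat -> R) -> (nat -> R) -> Prop)
    (z : R) (x y : nat -> R) : Prop :=
  exists (n : nat) (lam : 'I_n -> R) (zs : 'I_n -> R) (xs ys : 'I_n -> nat -> R),
    (forall k, 0 <= lam k) /\ \sum_k lam k = 1 /\
    (forall k, S (zs k) (xs k) (ys k)) /\
    z = \sum_k lam k * zs k /\
    (forall i, (1 <= i <= m)%N ->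
       x i = \sum_k lam k * xs k i /\ y i = \sum_k lam k * ys k i).

Definition conv2 (m : nat) (S : R -> (nat -> R) -> Prop) (z : R) (x : nat -> R) : Prop :=
  exists (n : nat) (lam : 'I_n -> R) (zs : 'I_n -> R) (xs : 'I_n -> nat -> R),
    (forall k, 0 <= lam k) /\ \sum_k lam k = 1 /\
    (forall k, S (zs k) (xs k)) /\
    z = \sum_k lam k * zs k /\
    (forall i, (1 <= i <= m)%N -> x i = \sum_k lam k * xs k i).

Definition projconv3 (m : nat) (S : R -> (nat -> R) -> (nat -> R) -> Prop)
    (z : R) (x : nat -> R) : Prop :=
  exists y : nat -> R, conv3 m S z x y.

End Defs.

(* Main.v *)
Require Import Defs.
From mathcomp Require Import all_boot all_order all_algebra.
From mathcomp Require Import zify ring lra.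
Import Order.TTheory GRing.Theory Num.Theory.
Local Open Scope ring_scope.

Lemma prefix_count (P : pred nat) (n : nat) :
  (forall i k, (1 <= i)%N -> (i <= k)%N -> (k <= n)%N -> P k -> P i) ->
  forall i, (1 <= i <= n)%N -> P i = (i <= count P (iota 1 n))%N.
Proof.
elim: n => [|n IH] Hd i Hi; first by lia.
have -> : iota 1 n.+1 = iota 1 n ++ [:: n.+1] by rewrite -[n.+1]addn1 iotaD /= add1n addn1.
rewrite count_cat /=.
case Pn: (P n.+1).
- have -> : count P (iota 1 n) = n.
    rewrite -[RHS](size_iota 1 n); apply/eqP; rewrite -all_count.
    apply/allP => k; rewrite mem_iota => Hk; apply: (Hd k n.+1) => //; lia.
  have -> : P i by apply: (Hd i n.+1) => //; lia.
  by symmetry; apply/idP; rewrite /=; lia.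
- have -> : (count P (iota 1 n) + false = count P (iota 1 n))%N by rewrite addn0.
  case: (ltngtP i n.+1) => Hin; last by move: Hin Pn => -> ->; have := count_size P (iota 1 n); rewrite size_iota; lia.
  + apply: IH; first by move=> a b Ha Hab Hb; apply: Hd => //; lia.
    lia.
  + lia.
Qed.

Lemma mono_le (f : nat -> nat) (n : nat) :
  (forall i, (1 <= i)%N -> (i < n)%N -> (f i < f i.+1)%N) ->
  forall i k, (1 <= i)%N -> (i <= k)%N -> (k <= n)%N -> (f i <= f k)%N.
Proof.
move=> Hf i k Hi; elim: k => [|k IH] Hik Hk; first lia.
case: (ltngtP i k.+1) => H; [|lia|by rewrite H].
apply: leq_trans (IH _ _) (ltnW (Hf k _ _)); lia.
Qed.

Lemma mono_lt (f : nat -> nat) (n : nat) :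
  (forall i, (1 <= i)%N -> (i < n)%N -> (f i < f i.+1)%N) ->
  forall i k, (1 <= i)%N -> (i < k)%N -> (k <= n)%N -> (f i < f k)%N.
Proof.
move=> Hf i [|k] Hi Hik Hk; first lia.
apply: leq_trans (Hf k _ _); [|lia|lia].
rewrite ltnS; apply: (@mono_le f n Hf); lia.
Qed.

Lemma sum_sub_le (R : realFieldType) (s : seq nat) (a b : nat) (f : nat -> R) :
  uniq s -> (forall i, i \in s -> (a <= i < b)%N) ->
  (forall i, (a <= i < b)%N -> 0 <= f i) ->
  \sum_(i <- s) f i <= \sum_(a <= i < b) f i.
Proof.
move=> Us Hs Hf.
rewrite [X in _ <= X](bigID (fun i => i \in s)) /=.
have -> : \sum_(a <= i < b | i \in s) f i = \sum_(i <- s) f i.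
  rewrite -big_filter; apply: perm_big; apply: uniq_perm.
  - by rewrite filter_uniq // iota_uniq.
  - done.
  - move=> i; rewrite mem_filter mem_index_iota.
    by case Hi: (i \in s) => //=; rewrite Hs.
rewrite lerDl big_seq_cond; apply: sumr_ge0 => i /andP[]; rewrite mem_index_iota => H _.
exact: Hf.
Qed.

Lemma termA (R : realFieldType) (phi b p x : R) :
  phi <= b * p -> 0 <= x -> phi - b * p + b * (p * (1 - x)) <= phi * (1 - x).
Proof. move=> H1 H2; nra. Qed.

Lemma termN (R : realFieldType) (phi b p x : R) :
  b * p <= phi -> x <= 1 -> 0 + b * (p * (1 - x)) <= phi * (1 - x).
Proof. move=> H1 H2; nra. Qed.

Lemma final_arith (R : realFieldType) (D SA PA PS SX SY PHY G eps M beta : R) :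
  0 < M -> 0 <= beta -> M^-1 * (D - SA) <= beta * (G - eps + PS - PA) ->
  G + SX <= eps -> SY = PS - SX -> SA - beta * M * PA + beta * M * SY <= PHY ->
  D <= PHY.
Proof.
move=> HM Hb H1 H2 H3 H4.
have H1' : D - SA <= M * (beta * (G - eps + PS - PA)).
  by have := ler_wpM2l (ltW HM) H1; rewrite [M * (M^-1 * _)]mulrA mulfV ?gt_eqF // mul1r.
have H5 : beta * M * (PS - eps + G) <= beta * M * SY.
  by apply: ler_wpM2l; [apply: mulr_ge0 => //; exact: ltW | lra].
nra.
Qed.

Ltac nlia := repeat match goal with
  | H : context [@Order.le _ _] |- _ => clear H
  | H : context [@Order.lt _ _] |- _ => clear H
  | H : context [@GRing.zero _] |- _ => clear H
  | H : context [@GRing.one _] |- _ => clear H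
  | H : exists _, _ |- _ => clear H
  end; lia.

Theorem mainTheorem8 (R : realFieldType) (m : nat) (eps : R) (pi h : nat -> R)
  (Hm : (2 <= m)%N)
  (Heps : 0 <= eps /\ eps < 1)
  (Hpi : forall i, (1 <= i <= m)%N -> 0 < pi i /\ pi i <= eps)
  (Hpisum : \sum_(1 <= i < m.+1) pi i = 1)
  (Hh : forall i j, (1 <= i)%N -> (i <= j)%N -> (j <= m)%N -> h j <= h i)
  (Hhm : 0 <= h m)
  (r l : nat) (t : nat -> nat) (delta : nat -> R)
  (Hr : (1 <= r <= pidx m pi eps)%N)
  (Hl : (1 <= l <= r)%N)
  (Ht1 : (1 <= t 1%N)%N)
  (Htinc : forall i, (1 <= i)%N -> (i < l)%N -> (t i < t i.+1)%N)
  (Htl : (t l <= r)%N)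
  (Hdelta : forall i, (1 <= i <= l)%N ->
     h (text t l r i.+1) - h (t i) <= delta (t i))
  (Hdeltasum : \sum_(1 <= i < l.+1) delta (t i) <= h r.+1)
  (v : nat) (q : nat -> nat)
  (Hv : (1 <= v <= pidx m pi eps - r + l)%N)
  (Hq1 : (r.+1 <= q 1%N)%N)
  (Hqinc : forall i, (1 <= i)%N -> (i < v)%N -> (q i < q i.+1)%N)
  (Hqv : (q v <= m)%N)
  (A : nat -> nat -> bool) (phi : nat -> R)
  (Hphi : forall i, (1 <= i <= v)%N -> 0 <= phi (q i))
  (Hbeta : forall j, (1 <= j <= m)%N -> exists beta : R,
     0 <= beta /\
     (forall i, (1 <= i <= v)%N -> A j i -> (j < q i)%N ->
        phi (q i) / (m%:R * pi (q i)) <= beta) /\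
     (forall i, (1 <= i <= v)%N -> ~~ A j i -> (j < q i)%N ->
        beta <= phi (q i) / (m%:R * pi (q i))) /\
     (m%:R)^-1 * (h (text t l r (acount t l j).+1) - h j
        - \sum_(1 <= i < l.+1 | (t i < j)%N) delta (t i)
        - (if inQ q v j then phi j else 0)
        - \sum_(1 <= i < v.+1 | A j i && (j < q i)%N) phi (q i))
     <= beta * (Fsum pi j - pi j - eps
        + \sum_(1 <= i < v.+1 | (j < q i)%N) pi (q i)
        - \sum_(1 <= i < v.+1 | A j i && (j < q i)%N) pi (q i))) :
  let lhs (z : R) (x : nat -> R) :=
    z + \sum_(1 <= i < l.+1) (h (t i) - h (text t l r i.+1) + delta (t i)) * x (t i)
      + \sum_(1 <= i < v.+1) phi (q i) * (1 - x (q i)) in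
  (forall (z : R) (x : nat -> R),
     projconv3 m (Sc m pi h eps) z x -> h (t 1%N) <= lhs z x) /\
  (forall (z : R) (x : nat -> R),
     conv2 m (Fc m pi h eps) z x -> h (t 1%N) <= lhs z x).
Proof.
move=> lhs.
have HM : (0 : R) < m%:R by rewrite ltr0n; nlia.
have Hpidx : (pidx m pi eps <= m)%N.
  by rewrite /pidx; apply/bigmax_leqP => k _; have := ltn_ord k; nlia.
have Hrm : (r <= m)%N by nlia.
clear Hr Hv Hpidx.
have Htb : forall i, (1 <= i <= l)%N -> (1 <= t i)%N && (t i <= r)%N.
  move=> i /andP[Hi1 Hil]; apply/andP; split.
  - by apply: leq_trans Ht1 (@mono_le t l Htinc 1 i _ _ _); nlia.
  - by apply: leq_trans (@mono_le t l Htinc i l _ _ _) Htl; nlia.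
have Hqb : forall i, (1 <= i <= v)%N -> (r < q i)%N && (q i <= m)%N.
  move=> i /andP[Hi1 Hil]; apply/andP; split.
  - by apply: leq_trans Hq1 (@mono_le q v Hqinc 1 i _ _ _); nlia.
  - by apply: leq_trans (@mono_le q v Hqinc i v _ _ _) Hqv; nlia.
have Hqinj : {in iota 1 v &, injective q}.
  move=> a b; rewrite !mem_iota => Ha Hb Hab.
  case: (ltngtP a b) => // H.
  - by move: (@mono_lt q v Hqinc a b ltac:(nlia) H ltac:(nlia)); rewrite Hab ltnn.
  - by move: (@mono_lt q v Hqinc b a ltac:(nlia) H ltac:(nlia)); rewrite Hab ltnn.
have allone : forall x : nat -> R, (forall i, (1 <= i <= m)%N -> x i = 1) ->
    \sum_(1 <= i < m.+1) pi i * x i <= eps -> False.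
  move=> x Hx Hk.
  have : \sum_(1 <= i < m.+1) pi i * x i = 1.
    by rewrite -Hpisum; apply: eq_big_nat => i Hi; rewrite Hx ?mulr1.
  move: Heps => [_ He]; lra.
have key : forall (z : R) (x : nat -> R) (j : nat), (1 <= j <= m)%N -> h j <= z -> x j = 0 ->
   (forall i, (1 <= i)%N -> (i < j)%N -> x i = 1) ->
   (forall i, (1 <= i <= m)%N -> 0 <= x i /\ x i <= 1) ->
   \sum_(1 <= i < m.+1) pi i * x i <= eps ->
   h (t 1%N) <= lhs z x.
  move=> z x j Hj Hz Hxj Hxlt Hx01 Hknap.
  set a := acount t l j.
  have [beta [Hb0 [HbA [HbN Hbeta']]]] := Hbeta j Hj.
  set I := (if inQ q v j then phi j else 0).
  have Hxt : forall i, (1 <= i <= l)%N -> 0 <= x (t i).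
    by move=> i Hi; have := Htb i Hi; move=> Hti; case: (Hx01 (t i) ltac:(nlia)).
  have Hterm : forall i, (1 <= i <= v)%N -> 0 <= phi (q i) * (1 - x (q i)).
    move=> i Hi; apply: mulr_ge0; first exact: Hphi.
    by have := Hqb i Hi => Hqi; case: (Hx01 (q i) ltac:(nlia)) => _; rewrite subr_ge0.
  have HT : h (t 1%N) - h (text t l r a.+1) + \sum_(1 <= i < l.+1 | (t i < j)%N) delta (t i)
     <= \sum_(1 <= i < l.+1) (h (t i) - h (text t l r i.+1) + delta (t i)) * x (t i).
    have Hpre : forall i, (1 <= i <= l)%N -> (t i < j)%N = (i <= a)%N.
      move=> i Hi; rewrite /a /acount.
      apply: (@prefix_count (fun i => (t i < j)%N) l) => // i0 k Hi0 Hk Hkl /= Htk.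
      by apply: leq_ltn_trans Htk; apply: (@mono_le t l Htinc); nlia.
    have Hal : (a <= l)%N.
      by rewrite /a /acount; have := count_size (fun i => (t i < j)%N) (iota 1 l); rewrite size_iota.
    have Htext : forall i, (1 <= i <= l)%N -> text t l r i = t i.
      by move=> i Hi; rewrite /text; case: eqP => // H; nlia.
    have Hc : forall i, (1 <= i <= l)%N -> 0 <= h (t i) - h (text t l r i.+1) + delta (t i).
      by move=> i Hi; have := Hdelta i Hi; lra.
    apply: le_trans (_ : \sum_(1 <= i < l.+1 | (t i < j)%N)
        (h (t i) - h (text t l r i.+1) + delta (t i)) <= _).
    - rewrite big_split /= lerD2r.
      rewrite big_mkcond (big_cat_nat _ (n := a.+1)) //=; try nlia.
      rewrite [X in _ <= _ + X](eq_big_nat _ _ (F2 := fun _ => 0)); last first.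
        by move=> i Hi; rewrite Hpre; [case: ifP => //; nlia | nlia].
      rewrite big1_eq addr0.
      rewrite (eq_big_nat _ _ (F2 := fun i => - h (text t l r i.+1) - - h (text t l r i))); last first.
        move=> i Hi; rewrite Hpre ?(Htext i); try nlia.
        rewrite ifT; [ring | nlia].
      rewrite telescope_sumr // (Htext 1%N); last nlia.
      by rewrite opprK addrC.
    - rewrite big_mkcond; apply: ler_sum_nat => i Hi /=.
      case: ifP => Hti.
      + by rewrite Hxlt ?mulr1 //; have := Htb i ltac:(nlia); nlia.
      + by apply: mulr_ge0; [apply: Hc | apply: Hxt]; nlia.
  have HQ1 : I + \sum_(1 <= i < v.+1 | (j < q i)%N) phi (q i) * (1 - x (q i))
      <= \sum_(1 <= i < v.+1) phi (q i) * (1 - x (q i)).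
    rewrite [X in _ <= X](bigID (fun i => (j < q i)%N)) /= addrC lerD2r.
    rewrite /I; case: ifP => HQ.
    - move/hasP: HQ => [i0 Hi0 /eqP Hqi0].
      rewrite big_mkcond (bigD1_seq i0) /=; last by rewrite /index_iota subn1 iota_uniq.
      + rewrite Hqi0 ltnn /= Hxj subr0 mulr1 lerDl.
        rewrite big_seq_cond; apply: sumr_ge0 => i /andP[]; rewrite mem_index_iota => Hi _.
        by case: ifP => // _; apply: Hterm; nlia.
      + by rewrite mem_index_iota; move: Hi0; rewrite mem_iota; nlia.
    - rewrite big_seq_cond; apply: sumr_ge0 => i /andP[]; rewrite mem_index_iota => Hi _.
      by apply: Hterm; nlia.
  have HQ2 : h (text t l r a.+1) - h j - \sum_(1 <= i < l.+1 | (t i < j)%N) delta (t i) - I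
      <= \sum_(1 <= i < v.+1 | (j < q i)%N) phi (q i) * (1 - x (q i)).
    have HMm : (0 : R) < m%:R by exact: HM.
    apply: (@final_arith R _ _ _ _ (\sum_(1 <= i < v.+1 | (j < q i)%N) pi (q i) * x (q i))
       (\sum_(1 <= i < v.+1 | (j < q i)%N) pi (q i) * (1 - x (q i))) _ _ _ _ _ HMm Hb0 Hbeta').
    -
      have HF : Fsum pi j - pi j = \sum_(1 <= i < j) pi i.
        by rewrite /Fsum big_nat_recr /= ?addrK //; nlia.
      rewrite HF.
      move: Hknap; rewrite (big_cat_nat _ (n := j)) /=; try nlia.
      rewrite [X in _ + X <= _]big_ltn /=; last nlia.
      rewrite Hxj mulr0 add0r.
      rewrite (eq_big_nat _ _ (F2 := pi)); last by move=> i Hi; rewrite Hxlt ?mulr1 //; nlia.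
      move=> Hk; apply: le_trans Hk; rewrite lerD2l.
      rewrite -(big_map q (fun k => (j < k)%N) (fun k => pi k * x k)) -big_filter.
      apply: sum_sub_le.
      + rewrite filter_uniq // map_inj_in_uniq; first by rewrite /index_iota subn1 iota_uniq.
        by move=> a0 b0; rewrite !mem_index_iota => Ha Hb; apply: Hqinj; rewrite mem_iota; nlia.
      + move=> i; rewrite mem_filter => /andP[Hji /mapP[k Hk Hik]].
        move: Hk; rewrite mem_index_iota => Hk; have := Hqb k ltac:(nlia).
        move: Hji => /= Hji; subst i; nlia.
      + move=> i Hi; apply: mulr_ge0; first by have [] := Hpi i ltac:(nlia) => /ltW.
        by have [] := Hx01 i ltac:(nlia).
    - by rewrite -sumrB; apply: eq_bigr => i _; ring.
    - set b := beta * m%:R.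
      apply: le_trans (_ : \sum_(1 <= i < v.+1 | (j < q i)%N)
         ((if A j i then phi (q i) - b * pi (q i) else 0) + b * (pi (q i) * (1 - x (q i)))) <= _).
      + rewrite big_split /= -big_mkcondr.
        have EA : forall F : nat -> R, \sum_(1 <= i < v.+1 | A j i && (j < q i)%N) F i
            = \sum_(1 <= i < v.+1 | (j < q i)%N && A j i) F i.
          by move=> F; apply: eq_bigl => i; rewrite andbC.
        by rewrite sumrB !EA -!mulr_sumr.
      + rewrite big_seq_cond [X in _ <= X]big_seq_cond; apply: ler_sum => i /andP[Hi Hjq].
        move: Hi; rewrite mem_index_iota => Hi.
        have Hi' : (1 <= i <= v)%N by nlia.
        have Hqi := Hqb i Hi'.
        have [Hp0 _] := Hpi (q i) ltac:(nlia).
        have Hmp : 0 < m%:R * pi (q i) by apply: mulr_gt0.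
        have [Hx0 Hx1] := Hx01 (q i) ltac:(nlia).
        case HAi: (A j i).
        * apply: termA => //.
          by have := HbA i Hi' HAi Hjq; rewrite ler_pdivrMr // /b mulrA.
        * apply: termN => //.
          by have := HbN i Hi' (negbT HAi) Hjq; rewrite ler_pdivlMr // /b mulrA.
  rewrite /lhs; lra.
have convex : forall (n : nat) (lam : 'I_n -> R) (zs : 'I_n -> R) (xs : 'I_n -> nat -> R) z x,
    (forall k, 0 <= lam k) -> \sum_k lam k = 1 ->
    (forall k, h (t 1%N) <= lhs (zs k) (xs k)) -> z = \sum_k lam k * zs k ->
    (forall i, (1 <= i <= m)%N -> x i = \sum_k lam k * xs k i) -> h (t 1%N) <= lhs z x.
  move=> n lam zs xs z x H0 H1 Hk Hz Hx.
  have E1 : forall X : 'I_n -> R, 1 - \sum_k lam k * X k = \sum_k lam k * (1 - X k).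
    move=> X; rewrite -[in LHS]H1 -sumrB; apply: eq_bigr => k _; ring.
  have -> : lhs z x = \sum_k lam k * lhs (zs k) (xs k).
    rewrite /lhs Hz.
    rewrite (eq_big_nat _ _ (F2 := fun i => (h (t i) - h (text t l r i.+1) + delta (t i))
        * \sum_k lam k * xs k (t i))); last first.
      by move=> i Hi; rewrite Hx //; have := Htb i ltac:(nlia); nlia.
    rewrite [X in _ + _ + X](eq_big_nat _ _ (F2 := fun i => phi (q i) *
        \sum_k lam k * (1 - xs k (q i)))); last first.
      by move=> i Hi; rewrite Hx ?E1 //; have := Hqb i ltac:(nlia); nlia.
    under eq_bigr do rewrite mulr_sumr.
    under [X in _ + _ + X]eq_bigr do rewrite mulr_sumr.
    rewrite exchange_big [X in _ + _ + X]exchange_big /= -!big_split /=.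
    apply: eq_bigr => k _.
    rewrite !mulrDr !mulr_sumr; congr (_ + _ + _); apply: eq_bigr => i _; ring.
  rewrite -[leLHS]mul1r -H1 mulr_suml; apply: ler_sum => k _.
  exact: ler_wpM2l.
split.
- move=> z x [y [n [lam [zs [xs [ys [H0 [H1 [HS [Hz Hxy]]]]]]]]]].
  apply: (convex n lam zs xs) => // [k | i Hi]; last by case: (Hxy i Hi).
  have [[Hz0 [Hx01 Hkn]] [[Hyn Hysum] [H1c [Hzy [Hxy0 Hord]]]]] := HS k.
  case: (boolP (has (fun i => ys k i != 0) (iota 1 m))).
  + move/hasP=> [j]; rewrite mem_iota => Hj Hyj.
    have Hj' : (1 <= j <= m)%N by nlia.
    have [nn Hn] := Hyn j Hj'.
    have Hyp : 0 < ys k j by rewrite lt0r Hyj Hn ler0n.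
    apply: (key _ _ j Hj') => //.
    * by have := Hzy j Hj'; rewrite -mulrBl pmulr_lge0 // subr_ge0.
    * have := Hxy0 j Hj'; rewrite oppr_ge0 pmulr_lle0 // => H.
      by have := Hx01 j Hj'; move=> [Ha _]; apply/eqP; rewrite eq_le H Ha.
    * move=> i Hi Hij.
      have := Hord i j Hi Hij ltac:(nlia); rewrite oppr_ge0 pmulr_lle0 // => H.
      by have := Hx01 i ltac:(nlia); move=> [_ Hb]; apply/eqP; rewrite eq_le Hb /=; lra.
  + move/hasPn=> Hn.
    have Hsy : \sum_(1 <= i < m.+1) ys k i = 0.
      rewrite big_nat_cond big1 // => i /andP[Hi _].
      by apply/eqP; apply: negbNE; apply: Hn; rewrite mem_iota; nlia.
    exfalso; apply: (allone (xs k)) => // i Hi.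
    have [Ha Hb] := H1c i Hi; rewrite Hsy subr0 mulr1 in Ha Hb.
    apply/eqP; rewrite eq_le; apply/andP; split; lra.
- move=> z x [n [lam [zs [xs [H0 [H1 [HS [Hz Hx]]]]]]]].
  apply: (convex n lam zs xs) => // k.
  have [Hz0 [H01 [Hh0 Hkn]]] := HS k.
  have Hx01 : forall i, (1 <= i <= m)%N -> 0 <= xs k i /\ xs k i <= 1.
    by move=> i Hi; case: (H01 i Hi) => ->; split; rewrite ?ler01 ?lexx.
  case: (boolP (has (fun i => xs k i == 0) (iota 1 m))).
  + move/hasP=> [j0]; rewrite mem_iota => Hj0 Hxj0.
    have ex : exists i, (fun i => (1 <= i <= m)%N && (xs k i == 0)) i.
      by exists j0; rewrite Hxj0 andbT; nlia.
    case: (ex_minnP ex) => j /andP[Hj /eqP Hxj] Hmin.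
    apply: (key _ _ j Hj) => //; first exact: Hh0.
    move=> i Hi Hij; case: (H01 i ltac:(nlia)) => // Hxi.
    by have := Hmin i; rewrite Hxi eqxx andbT; nlia.
  + move/hasPn=> Hn; exfalso; apply: (allone (xs k)) => // i Hi.
    case: (H01 i Hi) => // Hxi.
    by have := Hn i; rewrite mem_iota Hxi eqxx; nlia.
Qed.
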